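(* Let $\mu>-\tfrac12$ and $\xi,\alpha\in\mathbb{R}$. Then, for all real $t$, $$\text{(i)}\quad \sum_{n=0}^{\infty}\frac{h_{n+1}^{\mu}(\xi,\alpha)}{\gamma_{\mu}(n)}t^{n}=(\xi+2\alpha t)\,e^{\alpha t^{2}}e_{\mu}(\xi t),$$ $$\text{(ii)}\quad \sum_{n=0}^{\infty}\frac{h_{n+2}^{\mu}(\xi,\alpha)}{\gamma_{\mu}(n)}t^{n}=(\xi^{2}+4\xi\alpha t+4\alpha^{2}t^{2}+2\alpha)\,e^{\alpha t^{2}}e_{\mu}(\xi t)+4\alpha\mu\, e^{\alpha t^{2}}e_{\mu}(-\xi t).$$
   Context: For $\mu>-\tfrac12$ define $\gamma_\mu(2k)=\dfrac{2^{2k}k!\,\Gamma(k+\mu+1/2)}{\Gamma(\mu+1/2)}$ and $\gamma_\mu(2k+1)=\dfrac{2^{2k+1}k!\,\Gamma(k+\mu+3/2)}{\Gamma(\mu+1/2)}$ for $k\in\{0,1,2,\dots\}$. The Dunkl analogue of the exponential is $e_\mu(x)=\sum_{k=0}^\infty \dfrac{x^k}{\gamma_\mu(k)}$. The polynomials $h_n^\mu(\xi,\alpha)$ are defined by $$h_n^\mu(\xi,\alpha)=\gamma_\mu(n)\sum_{k=0}^{\lfloor n/2\rfloor}\frac{\alpha^k\xi^{n-2k}}{k!\,\gamma_\mu(n-2k)},$$ equivalently by the generating function $\sum_{n=0}^\infty \dfrac{h_n^\mu(\xi,\alpha)}{\gamma_\mu(n)}t^n=e^{\alpha t^2}e_\mu(\xi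 t)$. *)

(* Defs.v *)
From Stdlib Require Import Reals Arith.
From Coquelicot Require Import Coquelicot.
Open Scope R_scope.

(* Rising factorial (Pochhammer symbol): poch a k = a (a+1) ... (a+k-1)
   = Gamma(a+k)/Gamma(a) for a > 0. *)
Fixpoint poch (a : R) (k : nat) : R :=
  match k with
  | O => 1
  | S k' => poch a k' * (a + INR k')
  end.

(* gamma_mu(2k)   = 2^(2k)   k! Gamma(k+mu+1/2)/Gamma(mu+1/2)
   gamma_mu(2k+1) = 2^(2k+1) k! Gamma(k+mu+3/2)/Gamma(mu+1/2) *)
Definition gamma_mu (mu : R) (n : nat) : R :=
  let k := Nat.div2 n in
  if Nat.even n
  then 2 ^ n * INR (fact k) * poch (mu + /2) k
  else 2 ^ n * INR (fact k) * poch (mu + /2) (S k).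

Definition e_mu (mu x : R) : R :=
  Series (fun k => x ^ k / gamma_mu mu k).

Definition h_mu (mu : R) (n : nat) (xi alpha : R) : R :=
  gamma_mu mu n *
  sum_f_R0 (fun k => alpha ^ k * xi ^ (n - 2 * k)
                     / (INR (fact k) * gamma_mu mu (n - 2 * k)))
           (Nat.div2 n).

(* Main.v *)
Require Import Defs.
From Stdlib Require Import Reals Arith Lia Lra.
From Coquelicot Require Import Coquelicot.
Open Scope R_scope.

Lemma even_2m m : Nat.even (2 * m) = true.
Proof. induction m. reflexivity. replace (2 * S m)%nat with (S (S (2 * m))) by lia. exact IHm. Qed.
Lemma even_S2m m : Nat.even (S (2 * m)) = false.
Proof. induction m. reflexivity. replace (S (2 * S m))%nat with (S (S (S (2 * m)))) by lia. exact IHm. Qed.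
Lemma div2_2m m : Nat.div2 (2 * m) = m.
Proof. induction m. reflexivity. replace (2 * S m)%nat with (S (S (2 * m))) by lia. change (S (Nat.div2 (2 * m)) = S m). now rewrite IHm. Qed.
Lemma div2_S2m m : Nat.div2 (S (2 * m)) = m.
Proof. induction m. reflexivity. replace (S (2 * S m))%nat with (S (S (S (2 * m)))) by lia. change (S (Nat.div2 (S (2 * m))) = S m). now rewrite IHm. Qed.
Lemma par n : exists m, n = (2 * m)%nat \/ n = S (2 * m).
Proof. destruct (Nat.Even_or_Odd n) as [[m H]|[m H]]; exists m; lia. Qed.
Lemma div2_bound n : (2 * Nat.div2 n <= n <= 2 * Nat.div2 n + 1)%nat.
Proof. destruct (par n) as [m [->| ->]]; [rewrite div2_2m|rewrite div2_S2m]; lia. Qed.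
Lemma even_add2 m j : Nat.even (m + 2 * j) = Nat.even m.
Proof. induction j. now rewrite Nat.add_0_r. replace (m + 2 * S j)%nat with (S (S (m + 2 * j))) by lia. exact IHj. Qed.

Definition rr (mu : R) (n : nat) : R := INR n + 1 + (if Nat.even n then 2 * mu else 0).

Lemma gam_even mu k : gamma_mu mu (2 * k) = 2 ^ (2 * k) * INR (fact k) * poch (mu + /2) k.
Proof. unfold gamma_mu. cbv zeta. now rewrite even_2m, div2_2m. Qed.
Lemma gam_odd mu k : gamma_mu mu (S (2 * k)) = 2 ^ (S (2 * k)) * INR (fact k) * poch (mu + /2) (S k).
Proof. unfold gamma_mu. cbv zeta. now rewrite even_S2m, div2_S2m. Qed.

Lemma gam0 mu : gamma_mu mu 0 = 1.
Proof. unfold gamma_mu. simpl. ring. Qed.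

Lemma gam_S mu n : gamma_mu mu (S n) = gamma_mu mu n * rr mu n.
Proof.
  unfold rr. destruct (par n) as [k [-> | ->]].
  - rewrite gam_odd, gam_even, even_2m, mult_INR. change (poch (mu + /2) (S k)) with (poch (mu + /2) k * (mu + /2 + INR k)).
    rewrite <- tech_pow_Rmult. simpl (INR 2). field.
  - replace (S (S (2 * k))) with (2 * S k)%nat by lia.
    rewrite gam_odd, gam_even, even_S2m, fact_simpl, !mult_INR.
    replace (2 * S k)%nat with (S (S (2 * k))) by lia. rewrite <- !tech_pow_Rmult. rewrite !S_INR, mult_INR. simpl (INR 2). ring.
Qed.

Lemma rr_pos mu n : - / 2 < mu -> 0 < rr mu n.
Proof. intros h. unfold rr. pose proof (pos_INR n). destruct (Nat.even n); lra. Qed.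

Lemma gam_pos mu n : - / 2 < mu -> 0 < gamma_mu mu n.
Proof. intros h. induction n. rewrite gam0; lra. rewrite gam_S. apply Rmult_lt_0_compat; auto. now apply rr_pos. Qed.

Lemma gam_low mu n : - / 2 < mu ->
  Rmin (/2) (1 + 2 * mu) ^ n * INR (fact n) <= gamma_mu mu n.
Proof.
  intros h. set (s := Rmin (/2) (1 + 2 * mu)).
  assert (hs1 : s <= /2) by apply Rmin_l.
  assert (hs2 : s <= 1 + 2 * mu) by apply Rmin_r.
  assert (hs0 : 0 < s) by (unfold s; apply Rmin_glb_lt; lra).
  induction n.
  - rewrite gam0. simpl. lra.
  - rewrite gam_S, fact_simpl, mult_INR. simpl pow.
    assert (hr : s * INR (S n) <= rr mu n).
    { unfold rr. rewrite S_INR. pose proof (pos_INR n).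
      assert (s * INR n <= INR n) by nra.
      destruct (Nat.even n); lra. }
    pose proof (pos_INR (fact n)).
    assert (0 <= s ^ n) by (apply pow_le; lra).
    assert (0 <= s * INR (S n)) by (pose proof (pos_INR (S n)); nra).
    replace (s * s ^ n * (INR (S n) * INR (fact n))) with ((s ^ n * INR (fact n)) * (s * INR (S n))) by ring.
    apply Rmult_le_compat; try nra.
Qed.

Lemma exp_series y : is_series (fun k => y ^ k / INR (fact k)) (exp y).
Proof.
  eapply is_series_ext; [|apply (is_exp_Reals y)].
  intros n. simpl. rewrite pow_n_pow. unfold scal; simpl. unfold mult; simpl. unfold Rdiv. ring.
Qed.

Lemma interleave_sum (g : nat -> R) n :
  sum_f_R0 (fun j => if Nat.even j then g (Nat.div2 j) else 0) n = sum_f_R0 g (Nat.div2 n).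
Proof.
  assert (H : forall m, sum_f_R0 (fun j => if Nat.even j then g (Nat.div2 j) else 0) (2 * m) = sum_f_R0 g m
     /\ sum_f_R0 (fun j => if Nat.even j then g (Nat.div2 j) else 0) (S (2 * m)) = sum_f_R0 g m).
  { induction m.
    - simpl. split; ring.
    - destruct IHm as [_ IH2].
      assert (E : sum_f_R0 (fun j => if Nat.even j then g (Nat.div2 j) else 0) (2 * S m) = sum_f_R0 g (S m)).
      { replace (2 * S m)%nat with (S (S (2 * m))) by lia.
        rewrite tech5, IH2, tech5. f_equal.
        replace (S (S (2 * m))) with (2 * S m)%nat by lia. now rewrite even_2m, div2_2m. }
      split; auto. rewrite tech5, E, even_S2m. ring. }
  destruct (par n) as [m [-> | ->]]; [rewrite div2_2m | rewrite div2_S2m]; apply H.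
Qed.

Lemma interleave_series (v : nat -> R) l :
  is_series v l -> is_series (fun j => if Nat.even j then v (Nat.div2 j) else 0) l.
Proof.
  rewrite !is_series_Reals. intros H eps Heps.
  destruct (H eps Heps) as [N HN]. exists (2 * N)%nat. intros n Hn.
  rewrite interleave_sum. apply HN. pose proof (div2_bound n). lia.
Qed.

Lemma ex_b mu x : - / 2 < mu -> ex_series (fun j => Rabs (x ^ j / gamma_mu mu j)).
Proof.
  intros h. set (s := Rmin (/2) (1 + 2 * mu)).
  assert (hs0 : 0 < s) by (unfold s; apply Rmin_glb_lt; lra).
  apply (@ex_series_le R_AbsRing R_CompleteNormedModule _ (fun j => (Rabs x / s) ^ j / INR (fact j))).
  - intros n. change (norm (Rabs (x ^ n / gamma_mu mu n))) with (Rabs (Rabs (x ^ n / gamma_mu mu n))). rewrite Rabs_Rabsolu.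
    pose proof (gam_pos mu n h). pose proof (gam_low mu n h). fold s in H0.
    unfold Rdiv. rewrite Rabs_mult, Rabs_inv, <- RPow_abs, (Rabs_right (gamma_mu mu n)) by lra.
    rewrite Rpow_mult_distr, pow_inv.
    pose proof (INR_fact_lt_0 n).
    assert (0 < s ^ n) by (apply pow_lt; lra).
    assert (0 <= Rabs x ^ n) by (apply pow_le; apply Rabs_pos).
    replace (Rabs x ^ n * / s ^ n * / INR (fact n)) with (Rabs x ^ n * / (s ^ n * INR (fact n))) by (field; lra).
    apply Rmult_le_compat_l; auto. apply Rinv_le_contravar; auto. nra.
  - eexists. apply exp_series.
Qed.

Lemma e_mu_series mu x : - / 2 < mu -> is_series (fun j => x ^ j / gamma_mu mu j) (e_mu mu x).
Proof.
  intros h. unfold e_mu. apply Series_correct. apply ex_series_Rabs. now apply ex_b.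
Qed.

Definition cc (mu xi alpha : R) (n : nat) : R :=
  sum_f_R0 (fun k => alpha ^ k * xi ^ (n - 2 * k)
                     / (INR (fact k) * gamma_mu mu (n - 2 * k))) (Nat.div2 n).

Lemma h_cc mu xi alpha n : h_mu mu n xi alpha = gamma_mu mu n * cc mu xi alpha n.
Proof. reflexivity. Qed.

Lemma even_double k : Nat.even k = true -> k = (2 * Nat.div2 k)%nat.
Proof. destruct (par k) as [m [-> | ->]]; intros H. now rewrite div2_2m. now rewrite even_S2m in H. Qed.

Lemma L_series mu xi alpha t : - / 2 < mu ->
  is_series (fun n => cc mu xi alpha n * t ^ n) (exp (alpha * t ^ 2) * e_mu mu (xi * t)).
Proof.
  intros h.
  set (A := fun j => if Nat.even j then (alpha * t ^ 2) ^ (Nat.div2 j) / INR (fact (Nat.div2 j)) else 0).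
  set (B := fun j => (xi * t) ^ j / gamma_mu mu j).
  assert (HA : is_series A (exp (alpha * t ^ 2))) by exact (interleave_series (fun k => (alpha*t^2)^k / INR (fact k)) _ (exp_series _)).
  assert (HAabs : ex_series (fun n => Rabs (A n))).
  { exists (exp (Rabs (alpha * t ^ 2))).
    eapply is_series_ext; [|exact (interleave_series (fun k => (Rabs (alpha*t^2))^k / INR (fact k)) _ (exp_series _))].
    intros j. unfold A. destruct (Nat.even j).
    - unfold Rdiv. symmetry. rewrite Rabs_mult, <- RPow_abs, Rabs_inv, (Rabs_right (INR _)); auto.
      apply Rle_ge, pos_INR.
    - now rewrite Rabs_R0. }
  assert (HB := e_mu_series mu (xi * t) h).
  assert (HBabs := ex_b mu (xi * t) h).
  pose proof (is_series_mult A B _ _ HA HB HAabs HBabs) as HM.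
  eapply is_series_ext; [|exact HM].
  intros n. simpl.
  rewrite (sum_eq _ (fun j => if Nat.even j then
      (fun k => (alpha * t ^ 2) ^ k / INR (fact k) * B (n - 2 * k)%nat) (Nat.div2 j) else 0)).
  2:{ intros j _. unfold A. destruct (Nat.even j) eqn:E.
      - rewrite (even_double j E) at 3. reflexivity.
      - ring. }
  rewrite (interleave_sum (fun k => (alpha * t ^ 2) ^ k / INR (fact k) * B (n - 2 * k)%nat)). unfold cc. rewrite (Rmult_comm (sum_f_R0 _ _) (t ^ n)), scal_sum.
  apply sum_eq. intros k Hk. pose proof (div2_bound n).
  assert (Ht : t ^ n = (t ^ 2) ^ k * t ^ (n - 2 * k)).
  { rewrite <- pow_mult, <- pow_add. f_equal. lia. }
  unfold B. rewrite Ht, !Rpow_mult_distr.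
  pose proof (gam_pos mu (n - 2 * k) h). pose proof (INR_fact_lt_0 k).
  field. lra.
Qed.

Definition TT (mu xi alpha : R) (k m : nat) : R :=
  alpha ^ k * xi ^ m / (INR (fact k) * gamma_mu mu m).

Lemma cc_TT mu xi alpha n :
  cc mu xi alpha n = sum_f_R0 (fun k => TT mu xi alpha k (n - 2 * k)) (Nat.div2 n).
Proof. reflexivity. Qed.

Lemma cc0 mu xi alpha : cc mu xi alpha 0 = 1.
Proof. unfold cc. simpl. rewrite gam0. field. Qed.

Lemma cc1 mu xi alpha : - / 2 < mu -> rr mu 0 * cc mu xi alpha 1 = xi * cc mu xi alpha 0.
Proof.
  intros h. rewrite cc0. unfold cc. simpl sum_f_R0. simpl Nat.sub.
  rewrite gam_S, gam0. pose proof (rr_pos mu 0 h). simpl. field. lra.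
Qed.

Lemma ccSS mu xi alpha n :
  cc mu xi alpha (S (S n)) = TT mu xi alpha 0 (S (S n))
     + sum_f_R0 (fun k => TT mu xi alpha (S k) (n - 2 * k)) (Nat.div2 n).
Proof.
  rewrite cc_TT. change (Nat.div2 (S (S n))) with (S (Nat.div2 n)).
  rewrite (decomp_sum _ (S (Nat.div2 n))). 2: apply Nat.lt_0_succ. simpl Init.Nat.pred. f_equal.
  apply sum_eq. intros i _. f_equal. lia.
Qed.

Lemma ccS mu xi alpha n :
  xi * cc mu xi alpha (S n) = xi * TT mu xi alpha 0 (S n)
     + sum_f_R0 (fun k => if Nat.leb (2 * k + 1) n then xi * TT mu xi alpha (S k) (n - 2 * k - 1) else 0)
         (Nat.div2 n).
Proof.
  destruct (par n) as [m [-> | ->]].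
  - rewrite cc_TT, div2_S2m, div2_2m. destruct m as [|m].
    + simpl. ring.
    + rewrite decomp_sum by lia. simpl Init.Nat.pred. rewrite tech5.
      replace (Nat.leb (2 * S m + 1) (2 * S m)) with false by (symmetry; apply Nat.leb_gt; lia).
      rewrite Rmult_plus_distr_l, scal_sum. f_equal. rewrite Rplus_0_r. apply sum_eq. intros i Hi.
      replace (Nat.leb (2 * i + 1) (2 * S m)) with true by (symmetry; apply Nat.leb_le; lia).
      rewrite Rmult_comm. f_equal. f_equal. lia.
  - rewrite ccSS, div2_S2m, div2_2m. rewrite Rmult_plus_distr_l, scal_sum. f_equal.
    apply sum_eq. intros i Hi.
    replace (Nat.leb (2 * i + 1) (S (2 * m))) with true by (symmetry; apply Nat.leb_le; lia).
    rewrite Rmult_comm. f_equal. f_equal. lia.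
Qed.

Lemma cc_rec mu xi alpha n : - / 2 < mu ->
  rr mu (S n) * cc mu xi alpha (S (S n)) = xi * cc mu xi alpha (S n) + 2 * alpha * cc mu xi alpha n.
Proof.
  intros h. rewrite ccSS, ccS, (cc_TT mu xi alpha n).
  rewrite Rmult_plus_distr_l, !scal_sum, Rplus_assoc, <- sum_plus. f_equal.
  - unfold TT. rewrite (gam_S mu (S n)). pose proof (rr_pos mu (S n) h). pose proof (gam_pos mu (S n) h).
    simpl pow. simpl fact. simpl INR. field. lra.
  - apply sum_eq. intros k Hk. pose proof (div2_bound n).
    unfold TT. rewrite fact_simpl, mult_INR. pose proof (INR_fact_lt_0 k).
    destruct (Nat.leb (2 * k + 1) n) eqn:E.
    + apply Nat.leb_le in E.
      set (m := (n - 2 * k - 1)%nat).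
      replace (n - 2 * k)%nat with (S m) by (unfold m; lia).
      assert (Hp : Nat.even (S n) = Nat.even m).
      { replace (S n) with (m + 2 * S k)%nat by (unfold m; lia). apply even_add2. }
      assert (Hi : INR (S n) = INR m + 2 * INR k + 2).
      { replace (S n) with (m + 2 * S k)%nat by (unfold m; lia). rewrite plus_INR, mult_INR, (S_INR k). simpl (INR 2). ring. }
      rewrite gam_S. pose proof (rr_pos mu m h). pose proof (gam_pos mu m h).
      unfold rr in *. rewrite Hp, Hi. simpl pow. rewrite S_INR.
      pose proof (pos_INR k). pose proof (pos_INR m).
      destruct (Nat.even m); field; repeat split; lra.
    + apply Nat.leb_gt in E.
      assert (En : n = (2 * k)%nat) by lia. subst n.
      replace (2 * k - 2 * k)%nat with 0%nat by lia.
      unfold rr. rewrite even_S2m, (S_INR (2 * k)), mult_INR, (S_INR k). rewrite gam0. simpl pow. simpl (INR 2). pose proof (pos_INR k). field. lra.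
Qed.

Lemma isR_plus (a b : nat -> R) la lb : is_series a la -> is_series b lb ->
  is_series (fun n => a n + b n) (la + lb).
Proof. intros Ha Hb. exact (is_series_plus _ _ _ _ Ha Hb). Qed.
Lemma isR_scal c (a : nat -> R) l : is_series a l -> is_series (fun n => c * a n) (c * l).
Proof. intros Ha. exact (is_series_scal_l c _ _ Ha). Qed.
Lemma isR_shift (a : nat -> R) (l : R) : is_series a l ->
  is_series (fun n => match n with 0%nat => 0 | S m => a m end) l.
Proof. intros H. apply is_series_decr_1. match goal with |- is_series _ ?x => replace x with l end. exact H. change (l = Rplus l (Ropp 0)). rewrite Ropp_0, Rplus_0_r. reflexivity. Qed.

Lemma negpow t n : (- t) ^ n = if Nat.even n then t ^ n else - t ^ n.
Proof.
  induction n. reflexivity. change ((-t)^(S n)) with (-t * (-t)^n). change (t^(S n)) with (t * t^n).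
  rewrite IHn, Nat.even_succ. unfold Nat.odd.
  destruct (Nat.even n); simpl; ring.
Qed.

Theorem lemma2 (mu xi alpha : R) (hmu : - / 2 < mu) (t : R) :
  is_series (fun n => h_mu mu (n + 1) xi alpha / gamma_mu mu n * t ^ n)
    ((xi + 2 * alpha * t) * exp (alpha * t ^ 2) * e_mu mu (xi * t))
  /\
  is_series (fun n => h_mu mu (n + 2) xi alpha / gamma_mu mu n * t ^ n)
    ((xi ^ 2 + 4 * xi * alpha * t + 4 * alpha ^ 2 * t ^ 2 + 2 * alpha)
       * exp (alpha * t ^ 2) * e_mu mu (xi * t)
     + 4 * alpha * mu * exp (alpha * t ^ 2) * e_mu mu (- (xi * t))).
Proof.
  set (E := exp (alpha * t ^ 2)).
  set (L := E * e_mu mu (xi * t)).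
  set (Lm := E * e_mu mu (- (xi * t))).
  assert (HL : is_series (fun n => cc mu xi alpha n * t ^ n) L) by apply (L_series mu xi alpha t hmu).
  assert (HLm : is_series (fun n => cc mu xi alpha n * (- t) ^ n) Lm).
  { pose proof (L_series mu xi alpha (- t) hmu) as H.
    replace (alpha * (- t) ^ 2) with (alpha * t ^ 2) in H by ring.
    replace (xi * - t) with (- (xi * t)) in H by ring. exact H. }
  assert (HS1 : is_series (fun n => rr mu n * cc mu xi alpha (S n) * t ^ n) ((xi + 2 * alpha * t) * L)).
  { replace ((xi + 2 * alpha * t) * L) with (xi * L + (2 * alpha * t) * L) by ring.
    eapply is_series_ext; [| apply isR_plus; [apply (isR_scal xi _ _ HL) | apply isR_shift, (isR_scal (2 * alpha * t) _ _ HL)]].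
    intros n. simpl. destruct n as [|m].
    - rewrite cc1 by exact hmu. simpl. ring.
    - rewrite <- Rmult_assoc, cc_rec by exact hmu. simpl. ring. }
  split.
  - replace ((xi + 2 * alpha * t) * E * e_mu mu (xi * t)) with ((xi + 2 * alpha * t) * L) by (unfold L; ring).
    eapply is_series_ext; [| exact HS1].
    intros n. simpl. rewrite h_cc, Nat.add_1_r, gam_S. pose proof (gam_pos mu n hmu).
    field. lra.
  - assert (Hr : is_series (fun n => rr mu n * cc mu xi alpha n * t ^ n) (L + 2 * mu * Lm + t * ((xi + 2 * alpha * t) * L))).
    { eapply is_series_ext; [| apply isR_plus; [apply isR_plus; [exact HL | apply (isR_scal (2 * mu) _ _ HLm)] | apply isR_shift, (isR_scal t _ _ HS1)]].
      intros n. simpl. destruct n as [|m].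
      - unfold rr. simpl. ring.
      - rewrite negpow. unfold rr. rewrite Nat.even_succ. unfold Nat.odd. rewrite S_INR.
        change (t ^ S m) with (t * t ^ m).
        destruct (Nat.even m); simpl; ring. }
    replace ((xi ^ 2 + 4 * xi * alpha * t + 4 * alpha ^ 2 * t ^ 2 + 2 * alpha) * E * e_mu mu (xi * t)
       + 4 * alpha * mu * E * e_mu mu (- (xi * t)))
      with (xi * ((xi + 2 * alpha * t) * L) + 2 * alpha * (L + 2 * mu * Lm + t * ((xi + 2 * alpha * t) * L)))
      by (unfold L, Lm; ring).
    eapply is_series_ext; [| apply isR_plus; [apply (isR_scal xi _ _ HS1) | apply (isR_scal (2 * alpha) _ _ Hr)]].
    intros n. simpl. rewrite h_cc. replace (n + 2)%nat with (S (S n)) by lia.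
    rewrite !gam_S. pose proof (gam_pos mu n hmu). pose proof (rr_pos mu n hmu). pose proof (rr_pos mu (S n) hmu).
    replace (gamma_mu mu n * rr mu n * rr mu (S n) * cc mu xi alpha (S (S n)))
      with (gamma_mu mu n * rr mu n * (rr mu (S n) * cc mu xi alpha (S (S n)))) by ring.
    rewrite cc_rec by exact hmu. field. lra.
Qed.
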